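(* Let $\tau$ be a veering triangulation of $M$ with dual graph $\Gamma$. Identifying $H^1(M;\mathbb{R})\cong H_2(M,\partial M;\mathbb{R})$ by Lefschetz duality, $$\mathrm{cone}_2(\tau)=\mathrm{cone}_1^\vee(\Gamma),$$ i.e. a class is carried by $\tau^{(2)}$ if and only if its algebraic intersection with every closed curve positively transverse to $\tau^{(2)}$ is nonnegative. Moreover every integral class in $\mathrm{cone}_1^\vee(\Gamma)\cap H^1(M;\mathbb{Z})$ is represented by an embedded surface carried by $\tau^{(2)}$.
   Context: $\tau$ is a veering triangulation of $M$ (taut ideal triangulation with cooriented faces, each tetrahedron having two bottom and two top faces, angle sum $2\pi$ around edges, with a consistent right/left veer on edges). The 2-skeleton $\tau^{(2)}$ is a transversely oriented branched surface; a nonnegative cycle on $\tau^{(2)}$ is an assignment of nonnegative real weights to faces such that for each edge $e$ the sum of weights of faces incident to $e$ on one side of $e$ equals the sum on the other side; it defines a class in $H_2(M,\partial M;\mathbb{R})$, and $\mathrm{cone}_2(\tau)$ is the set of classes so represented (carried classes). A surface is carried if it lies in a fibered neighborhood of $\tau^{(2)}$ positively transverse to the fibers. The dual graph $\Gamma$: a vertex inside each tetrahedron and for each face a directed edge crossing it in the direction of its coorientation; directed cycles of $\Gamma$ are closed curves positively transverse to $\tau^{(2)}$, and every such closed transversal is homotopic to one. $\mathrm{cone}_1(\Gamma)\subset H_1(M;\mathbb{R})$ is the nonnegative span of classes of directed cycles of $\Gamma$, and $\mathrm{cone}_1^\vee(\Gamma)=\{u\in H^1(M;\mathbb{R}): u(v)\ge0\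 \forall v\in\mathrm{cone}_1(\Gamma)\}$. *)

(* Defs.v *)
(* Combinatorial model of a veering (ideal, taut)
   triangulation, its 2-skeleton as a branched surface, the dual graph Gamma,
   and H^1(M;R) computed as the first cohomology of the dual cell complex
   (cochains on faces = 1-cochains on Gamma). *)
From HB Require Import structures.
From mathcomp Require Import all_boot all_order all_algebra.
From mathcomp Require Import fingroup perm.
From mathcomp Require Import reals.
Set Implicit Arguments. Unset Strict Implicit. Unset Printing Implicit Defensive.
Import Order.TTheory GRing.Theory Num.Theory.
Local Open Scope ring_scope.

Section Veering.
Variable T : finType.                                  (* tetrahedra *)
(* a "slot" (t,i) is face i of tetrahedron t (face i = opposite vertex i) *)
Variable glue : T * 'I_4 -> T * 'I_4.
Variable gp : T * 'I_4 -> {perm 'I_4}.                 (* vertex gluing map *)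
Variable top : T * 'I_4 -> bool.                       (* coorientation: is the face a top face of its tet *)

(* oriented edge occurrences (t,k,l) : edge from vertex k to vertex l of t *)
Definition oedge := (T * 'I_4 * 'I_4)%type.

Definition oe_adj : rel oedge := fun x y =>
  [exists i : 'I_4, [&& i != x.1.2, i != x.2, (glue (x.1.1, i)).1 == y.1.1,
       gp (x.1.1, i) x.1.2 == y.1.2 & gp (x.1.1, i) x.2 == y.2]].

(* two oriented edge occurrences represent the same oriented edge of M *)
Definition edge_equiv : rel oedge := connect oe_adj.

Definition tet_adj : rel T := fun t s => [exists i : 'I_4, (glue (t, i)).1 == s].

(* an oriented ideal triangulation (of the compact 3-manifold M whose
   interior is the glued-up space minus the ideal vertices) *)
Definition ideal_triangulation : Prop :=
  (forall s, glue (glue s) = s) /\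
  (forall s, glue s != s) /\
  (forall s, gp s s.2 = (glue s).2) /\
  (forall s v, gp (glue s) (gp s v) = v) /\
  (forall s, odd_perm (gp s)) /\                      (* orientation *)
  (forall t k l, k != l -> ~~ edge_equiv (t, k, l) (t, l, k)) /\
  (forall t s, connect tet_adj t s).

Definition taut_coorientation : Prop :=
  (forall t, #|[set i : 'I_4 | top (t, i)]| = 2) /\
  (forall s, top (glue s) = ~~ top s).

Definition pi_angle (x : oedge) : bool :=
  [forall i : 'I_4, forall j : 'I_4,
     [&& i != x.1.2, i != x.2, j != x.1.2 & j != x.2] ==>
     (top (x.1.1, i) == top (x.1.1, j))].

(* angle sum 2 pi around every edge: exactly two pi angles in every edge class *)
Definition angle_sum_2pi : Prop :=
  forall o : oedge, o.1.2 != o.2 ->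
    #|[set x : oedge | edge_equiv o x && pi_angle x]| = 2.

(* parity of the ordering (a,b,c,d) of the vertices of a tet, vertex order
   0,1,2,3 being positively oriented *)
Definition even4 (a b c d : 'I_4) : bool :=
  ~~ odd ((b < a)%N + (c < a)%N + (d < a)%N + (c < b)%N + (d < b)%N + (d < c)%N).

(* veering: a 2-colouring (right/left veer) of the edges of M such that in
   every tet, viewed from above, going anticlockwise around the equator from
   an end of the top diagonal the colours alternate  right,left,right,left *)
Definition veering_colouring (col : oedge -> bool) : Prop :=
  [/\ forall x y, edge_equiv x y -> col x = col y,
      forall t k l, col (t, k, l) = col (t, l, k)
    & forall t (a b c d : 'I_4), uniq [:: a; b; c; d] ->
        top (t, c) -> top (t, d) ->   (* {a,b} is the top diagonal *)
        [/\ col (t, a, c) = even4 a b c d, col (t, b, d) = even4 a b c d,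
            col (t, a, d) = ~~ even4 a b c d & col (t, b, c) = ~~ even4 a b c d]].

Definition veering_triangulation : Prop :=
  [/\ ideal_triangulation, taut_coorientation, angle_sum_2pi
    & exists col, veering_colouring col].

Variable R : realType.

(* a real function on slots that is a function on faces of tau *)
Definition face_fun (w : T * 'I_4 -> R) : Prop := forall s, w (glue s) = w s.

(* going around the oriented edge x (right hand rule), face i of x.1.1 is the
   face through which one leaves the tet *)
Definition is_exit (x : oedge) (i : 'I_4) : bool :=
  [&& i != x.1.2, i != x.2 &
      [exists j : 'I_4, [&& j != x.1.2, j != x.2, j != i & even4 x.1.2 x.2 i j]]].

(* sums of weights of the faces incident to the edge o on its two sides:
   faces crossed upward (resp. downward) by a small loop encircling o *)
Definition side_sum (w : T * 'I_4 -> R) (o : oedge) (up : bool) : R :=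
  \sum_(x : oedge | edge_equiv o x)
     \sum_(i : 'I_4 | is_exit x i && (top (x.1.1, i) == up)) w (x.1.1, i).

(* switch (branch) equations = cocycle condition in the dual complex *)
Definition switch_cond (w : T * 'I_4 -> R) : Prop :=
  forall o : oedge, o.1.2 != o.2 -> side_sum w o true = side_sum w o false.

(* cycles on tau^(2) / 1-cocycles on the dual complex *)
Definition tau_cycle (w : T * 'I_4 -> R) : Prop := face_fun w /\ switch_cond w.

(* coboundary of a 0-cochain f on the vertices of Gamma (tetrahedra) *)
Definition delta (f : T -> R) (s : T * 'I_4) : R :=
  if top s then f (glue s).1 - f s.1 else f s.1 - f (glue s).1.

(* equal classes in H^1(M;R) *)
Definition cohomologous (u v : T * 'I_4 -> R) : Prop :=
  exists f : T -> R, forall s, v s = u s + delta f s.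

(* [u] lies in cone_2(tau): represented by a nonnegative cycle on tau^(2) *)
Definition in_cone2 (u : T * 'I_4 -> R) : Prop :=
  exists w, [/\ tau_cycle w, forall s, 0 <= w s & cohomologous u w].

(* directed cycles of Gamma: a directed edge of Gamma is a top slot (t,i),
   from t to the tet (glue (t,i)).1 above the face *)
Definition directed_cycle (c : seq (T * 'I_4)) : Prop :=
  [/\ c != [::], all top c, path.cycle (fun s s' : T * 'I_4 => (glue s).1 == s'.1) c
    & uniq (map fst c)].

Definition in_cone1_dual (u : T * 'I_4 -> R) : Prop :=
  forall c, directed_cycle c -> 0 <= \sum_(s <- c) u s.

Definition integral_class (u : T * 'I_4 -> R) : Prop :=
  exists z : T * 'I_4 -> int,
    tau_cycle (fun s => (z s)%:~R) /\ cohomologous (fun s => (z s)%:~R) u.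

(* [u] is represented by an embedded surface carried by tau^(2), i.e. by a
   nonnegative integral weight system on tau^(2) *)
Definition carried_surface_class (u : T * 'I_4 -> R) : Prop :=
  exists n : T * 'I_4 -> nat,
    tau_cycle (fun s => (n s)%:R) /\ cohomologous u (fun s => (n s)%:R).

End Veering.

(* Main.v *)
Require Import Defs.
From HB Require Import structures.
From mathcomp Require Import all_boot all_order all_algebra.
From mathcomp Require Import fingroup perm.
From mathcomp Require Import reals.
From mathcomp Require Import ring lra.
Set Implicit Arguments. Unset Strict Implicit. Unset Printing Implicit Defensive.

Definition even4n (a b c d : nat) : bool :=
  ~~ odd ((b < a)%N + (c < a)%N + (d < a)%N + (c < b)%N + (d < b)%N + (d < c)%N).
Definition ex4n (k l i : nat) : bool :=
  [&& i != k, i != l & has (fun j => [&& j != k, j != l, j != i & even4n k l i j]) (iota 0 4)].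
Definition ex4 (k l i : 'I_4) : bool :=
  [&& i != k, i != l & [exists j : 'I_4, [&& j != k, j != l, j != i & even4 k l i j]]].
Definition I4 := iota 0 4.
Definition tpn (a b x : nat) := if x == a then b else if x == b then a else x.

Lemma N1 : all (fun k => all (fun l => (k != l) ==> has (fun e => all (fun i => ex4n k l i == (i == e)) I4) I4) I4) I4.
Proof. by vm_compute. Qed.
Lemma N2 : all (fun a => all (fun b => all (fun k => all (fun l => all (fun i => all (fun j =>
  ((a != b) && uniq [:: k; l; i; j]) ==> (even4n (tpn a b k) (tpn a b l) (tpn a b i) (tpn a b j) == ~~ even4n k l i j)) I4) I4) I4) I4) I4) I4.
Proof. Time by vm_compute. Qed.
Lemma N4 : all (fun k => all (fun l => all (fun c => all (fun d =>
  [&& k != l, c != k, c != l, d != k, d != l, ~~ ex4n k l c & ~~ ex4n k l d] ==> (c == d)) I4) I4) I4) I4.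
Proof. by vm_compute. Qed.
Lemma N5 : all (fun k => all (fun l => all (fun e => all (fun j =>
  uniq [:: k; l; e; j] ==> (even4n k l e j || ~~ ex4n k l e)) I4) I4) I4) I4.
Proof. by vm_compute. Qed.

Lemma memI4 (x : 'I_4) : (val x \in I4).
Proof. by rewrite mem_iota ltn_ord. Qed.

Lemma ex4E (k l i : 'I_4) : ex4 k l i = ex4n k l i.
Proof.
rewrite /ex4 /ex4n; congr [&& _, _ & _].
apply/existsP/hasP => [[j /and4P[H1 H2 H3 H4]]|[j Hj /and4P[H1 H2 H3 H4]]].
  by exists (val j); rewrite ?memI4 //; apply/and4P; split.
have jl : (j < 4)%N by move: Hj; rewrite mem_iota.
exists (Ordinal jl); apply/and4P; split => //.
Qed.

Lemma ex_unique (k l : 'I_4) : k != l -> exists e : 'I_4, forall i, ex4 k l i = (i == e).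
Proof.
move=> kl; move/allP: N1 => /(_ _ (memI4 k)) /allP /(_ _ (memI4 l)) /implyP.
rewrite val_eqE => /(_ kl) /hasP[e eI /allP He].
have el : (e < 4)%N by move: eI; rewrite mem_iota.
exists (Ordinal el) => i; rewrite ex4E; apply/eqP.
by rewrite -val_eqE /=; apply: He; apply: memI4.
Qed.

Lemma val_tperm (a b x : 'I_4) : val (tperm a b x) = tpn a b x.
Proof.
rewrite /tpn; case: tpermP => [->|->|/eqP/negPf xa /eqP/negPf xb]; rewrite ?eqxx //.
  by case: eqVneq => // ->.
by rewrite !val_eqE xa xb.
Qed.

Lemma uniq_val4 (k l i j : 'I_4) : uniq [:: val k; val l; val i; val j] = uniq [:: k; l; i; j].
Proof. by rewrite -[[:: val k; _; _; _]]/(map val [:: k; l; i; j]) (map_inj_uniq val_inj). Qed.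

Lemma TL (a b k l i j : 'I_4) : a != b -> uniq [:: k; l; i; j] ->
  even4 (tperm a b k) (tperm a b l) (tperm a b i) (tperm a b j) = ~~ even4 k l i j.
Proof.
move=> ab u.
move/allP: N2 => /(_ _ (memI4 a)) /allP /(_ _ (memI4 b)) /allP /(_ _ (memI4 k))
  /allP /(_ _ (memI4 l)) /allP /(_ _ (memI4 i)) /allP /(_ _ (memI4 j)) /implyP.
rewrite val_eqE ab uniq_val4 u => /(_ isT) /eqP.
by rewrite -!val_tperm.
Qed.

Lemma G (p : {perm 'I_4}) (k l i j : 'I_4) : uniq [:: k; l; i; j] ->
  even4 (p k) (p l) (p i) (p j) = even4 k l i j (+) odd_perm p.
Proof.
case: (prod_tpermP p) => ts -> dts.
elim: ts dts k l i j => [|[a b] ts IH] /=.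
  by move=> _ k l i j _; rewrite big_nil !perm1 odd_perm1 addbF.
move=> /andP[ab dts] k l i j u.
rewrite big_cons !permM odd_mul_tperm /= ab IH //.
  by rewrite TL // addbA addbT.
by rewrite -[[:: tperm a b k; _; _; _]]/(map (tperm a b) [:: k; l; i; j]) (map_inj_uniq perm_inj).
Qed.

Lemma exit_next (p : {perm 'I_4}) (k l e : 'I_4) : odd_perm p -> k != l -> ex4 k l e -> ~~ ex4 (p k) (p l) (p e).
Proof.
move=> op kl /and3P[ek el /existsP[j /and4P[jk jl je ev]]].
have u : uniq [:: k; l; e; j].
  rewrite /= !inE !negb_or (eq_sym k e) (eq_sym k j) (eq_sym l e) (eq_sym l j) (eq_sym e j).
  by rewrite kl ek el jk jl je.
have := G p u; rewrite ev op /= => ev'.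
move/allP: N5 => /(_ _ (memI4 (p k))) /allP /(_ _ (memI4 (p l))) /allP /(_ _ (memI4 (p e)))
  /allP /(_ _ (memI4 (p j))) /implyP.
rewrite uniq_val4 -[[:: p k; _; _; _]]/(map p [:: k; l; e; j]) (map_inj_uniq perm_inj) u.
have ev2 : even4n (p k) (p l) (p e) (p j) = false := ev'.
by move=> /(_ isT); rewrite ev2 ex4E.
Qed.

Lemma two_faces (k l c d : 'I_4) : k != l -> c != k -> c != l -> d != k -> d != l ->
  ~~ ex4 k l c -> ~~ ex4 k l d -> c = d.
Proof.
move=> kl ck cl dk dl nc nd.
move/allP: N4 => /(_ _ (memI4 k)) /allP /(_ _ (memI4 l)) /allP /(_ _ (memI4 c))
  /allP /(_ _ (memI4 d)) /implyP.
rewrite !val_eqE -!ex4E kl ck cl dk dl nc nd => /(_ isT) /eqP.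
by move=> H; rewrite H.
Qed.

Import Order.TTheory GRing.Theory Num.Theory.
Local Open Scope ring_scope.

Definition exf (k l : 'I_4) : 'I_4 := odflt k [pick i | ex4 k l i].

Lemma exfP (k l : 'I_4) : k != l -> forall i, ex4 k l i = (i == exf k l).
Proof.
move=> kl; case: (ex_unique kl) => e He.
rewrite /exf; case: pickP => [i' Hi'|H] /=.
  by rewrite He in Hi'; move/eqP: Hi' => ->.
by have := H e; rewrite He eqxx.
Qed.

Definition nx (T : finType) (glue : T * 'I_4 -> T * 'I_4) (gp : T * 'I_4 -> {perm 'I_4})
  (x : oedge T) : oedge T :=
  let s := (x.1.1, exf x.1.2 x.2) in ((glue s).1, gp s x.1.2, gp s x.2).

Lemma delta_switch (T : finType) (glue : T * 'I_4 -> T * 'I_4) (gp : T * 'I_4 -> {perm 'I_4})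
  (top : T * 'I_4 -> bool) (R : realType) (f : T -> R) :
  (forall s, glue (glue s) = s) -> (forall s, gp s s.2 = (glue s).2) -> (forall s, odd_perm (gp s)) ->
  switch_cond glue gp top (delta glue top f).
Proof.
move=> g2 gpo godd o Ho.
set C := edge_equiv glue gp o.
have Cd : forall x, C x -> x.1.2 != x.2.
  move=> x Cx; have cl : closed (oe_adj glue gp) (fun x : oedge T => x.1.2 != x.2).
    move=> y z /existsP[i /and5P[_ _ _ /eqP E1 /eqP E2]].
    by rewrite /in_mem /= -E1 -E2 (inj_eq perm_inj).
  by have := closed_connect cl Cx; rewrite /in_mem /= Ho.
apply/eqP; rewrite -subr_eq0 /side_sum -sumrB.
rewrite (eq_bigr (fun x => f (nx glue gp x).1.1 - f x.1.1)); last first.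
  move=> x Cx; have He := exfP (Cd x Cx).
  rewrite (eq_bigl (fun i => (i == exf x.1.2 x.2) && (top (x.1.1, i) == true))); last by move=> i; rewrite -He.
  rewrite [X in _ - X](eq_bigl (fun i => (i == exf x.1.2 x.2) && (top (x.1.1, i) == false))); last by move=> i; rewrite -He.
  rewrite !big_mkcondr !big_pred1_eq /delta /nx /=.
  by case: (top _); rewrite /= ?subr0 ?sub0r ?opprB.
rewrite sumrB subr_eq0; apply/eqP.
set CS := [set x | C x].
have E : forall F : oedge T -> R, \sum_(x | C x) F x = \sum_(x in CS) F x.
  by move=> F; apply: eq_bigl => x; rewrite inE.
have Hex : forall x, C x -> ex4 x.1.2 x.2 (exf x.1.2 x.2).
  by move=> x Cx; rewrite (exfP (Cd x Cx)) eqxx.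
have inj : {in CS &, injective (nx glue gp)}.
  move=> x y; rewrite !inE => Cx Cy.
  have nkx := Cd x Cx; have nky := Cd y Cy.
  have hx := Hex x Cx; have hy := Hex y Cy.
  move: x y Cx Cy nkx nky hx hy => [[tx kx] lx] [[ty ky] ly] /= Cx Cy nkx nky hx hy.
  rewrite /nx /= => -[E1 E2 E3].
  have E4 : (glue (tx, exf kx lx)).2 = (glue (ty, exf ky ly)).2.
    rewrite -!gpo /=.
    have [hx1 hx2 _] := and3P hx; have [hy1 hy2 _] := and3P hy.
    apply: (@two_faces (gp (tx, exf kx lx) kx) (gp (tx, exf kx lx) lx)).
    - by rewrite (inj_eq perm_inj).
    - by rewrite (inj_eq perm_inj).
    - by rewrite (inj_eq perm_inj).
    - by rewrite E2 (inj_eq perm_inj).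
    - by rewrite E3 (inj_eq perm_inj).
    - exact: exit_next.
    - by rewrite E2 E3; exact: exit_next.
  have Eg : glue (tx, exf kx lx) = glue (ty, exf ky ly).
    by move: E1 E4; case: (glue (tx, exf kx lx)) => ??; case: (glue (ty, exf ky ly)) => ?? /= -> ->.
  have : (tx, exf kx lx) = (ty, exf ky ly) by rewrite -[LHS]g2 Eg g2.
  case=> Et Ee; rewrite -Et -Ee in E2 E3.
  by rewrite Et (perm_inj E2) (perm_inj E3).
rewrite !E -(big_imset (fun y : oedge T => f y.1.1) inj).
have -> : nx glue gp @: CS = CS; last by [].
apply/eqP; rewrite eqEcard card_in_imset // leqnn andbT.
apply/subsetP => _ /imsetP[x Cx ->]; rewrite inE.
rewrite inE in Cx; have hx := Hex x Cx; have [h1 h2 _] := and3P hx.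
apply: connect_trans Cx _; apply: connect1.
by apply/existsP; exists (exf x.1.2 x.2); rewrite h1 h2 /= !eqxx.
Qed.

Fixpoint isWalk (T : finType) (glue : T * 'I_4 -> T * 'I_4) (top : T * 'I_4 -> bool)
  (v : T) (p : seq (T * 'I_4)) : bool :=
  match p with
  | [::] => true
  | x :: p' => [&& x.1 == v, top x & isWalk glue top (glue x).1 p']
  end.

Definition spath (T : finType) glue top (v : T) p := isWalk glue top v p && uniq (map fst p).

Fixpoint allseqs (S : finType) (n : nat) : seq (seq S) :=
  if n is n'.+1 then [::] :: [seq x :: s | x <- enum S, s <- allseqs S n'] else [:: [::]].

Lemma allseqsP (S : finType) n (s : seq S) : (size s <= n)%N -> s \in allseqs S n.
Proof.
elim: n s => [|n IH] [|x s] //=; rewrite ltnS => hs.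
by rewrite inE; apply/orP; right; apply: allpairs_f; rewrite ?mem_enum // IH.
Qed.

Lemma walk_suffix (T : finType) glue top (v : T) p1 x p2 :
  isWalk glue top v (p1 ++ x :: p2) -> isWalk glue top x.1 (x :: p2).
Proof.
elim: p1 v => [|y p1 IH] v /=; last by case/and3P => _ _ /IH.
by case/and3P => _ a b; rewrite eqxx a b.
Qed.

Lemma walk_top (T : finType) glue top (v : T) p : isWalk glue top v p -> all top p.
Proof. by elim: p v => [|x p IH] v //= /and3P[_ -> /IH]. Qed.

Lemma walk_cycle (T : finType) glue top p1 x p2 z : forall (y : T * 'I_4) (v : T),
  (glue y).1 = v -> isWalk glue top v (p1 ++ x :: p2) -> x.1 = z.1 ->
  path (fun s s' : T * 'I_4 => (glue s).1 == s'.1) y (rcons p1 z).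
Proof.
elim: p1 => [|w p1 IH] y v /= gy.
  by case/and3P => [/eqP xv _ _] xz; rewrite andbT gy -xv xz.
case/and3P => [/eqP wv _ W] xz.
by rewrite (IH w _ erefl W xz) andbT gy wv.
Qed.

Lemma bigmin_le (R : realDomainType) (I : eqType) (L : seq I) (P : pred I) (F : I -> R) p :
  p \in L -> P p -> \big[Num.min/0]_(q <- L | P q) F q <= F p.
Proof.
elim: L => // x L IH; rewrite inE big_cons => /orP[/eqP<-|pL] Pp.
  by rewrite Pp ge_min lexx.
by case: ifP => _; rewrite ?ge_min IH ?orbT.
Qed.

Lemma BF (T : finType) (glue : T * 'I_4 -> T * 'I_4) (top : T * 'I_4 -> bool)
  (R : realDomainType) (u : T * 'I_4 -> R) :
  (forall c, directed_cycle glue top c -> 0 <= \sum_(s <- c) u s) ->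
  exists g : T -> R, forall s, top s -> 0 <= u s + g (glue s).1 - g s.1.
Proof.
move=> Hc.
pose L := allseqs (T * 'I_4)%type #|T|.
pose g v := \big[Num.min/0]_(p <- L | spath glue top v p) \sum_(s <- p) u s.
have gle : forall v p, spath glue top v p -> g v <= \sum_(s <- p) u s.
  move=> v p sp; apply: bigmin_le => //; apply: allseqsP.
  case/andP: sp => _ up.
  by rewrite -(size_map fst) -(card_uniqP up) max_card.
have gat : forall v, exists2 p, spath glue top v p & g v = \sum_(s <- p) u s.
  move=> v; rewrite /g; apply: (big_ind (fun x => exists2 p, spath glue top v p & x = \sum_(s <- p) u s)).
  - by exists [::]; rewrite ?big_nil.
  - move=> a b [pa spa ->] [pb spb ->]; case: leP => _.
      by exists pa.
    by exists pb.
  - by move=> p sp; exists p.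
exists g => s ts.
have [p sp gp] := gat (glue s).1.
case: (boolP (s.1 \in map fst p)) => [/mapP[x xp ex]|nin].
  move: sp gp; case/splitPr: xp => p1 p2 /andP[W U] gp.
  have w2 : spath glue top s.1 (x :: p2).
    apply/andP; split; first by rewrite ex; exact: walk_suffix W.
    by move: U; rewrite map_cat cat_uniq => /and3P[_ _ ->].
  have cyc : directed_cycle glue top (s :: p1).
    split => //.
    - by rewrite /= ts; move: (walk_top W); rewrite all_cat => /andP[->].
    - exact: (walk_cycle (z := s) erefl W (esym ex)).
    - move: U; rewrite /= map_cat cat_uniq => /and3P[-> H2 _].
      by rewrite andbT; move: H2; rewrite /= ex negb_or => /andP[].
  have := Hc _ cyc; rewrite big_cons => h1.
  have := gle _ _ w2; rewrite gp big_cat /= => h2.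
  lra.
have sp' : spath glue top s.1 (s :: p).
  by case/andP: sp => W U; rewrite /spath /= eqxx ts W nin U.
have := gle _ _ sp'; rewrite big_cons gp => h; lra.
Qed.

Lemma delta_face (T : finType) (glue : T * 'I_4 -> T * 'I_4) (top : T * 'I_4 -> bool)
  (R : realType) (f : T -> R) :
  (forall s, glue (glue s) = s) -> (forall s, top (glue s) = ~~ top s) ->
  face_fun glue (delta glue top f).
Proof. by move=> g2 tg s; rewrite /delta tg g2; case: (top s). Qed.

Lemma walk_map (T : finType) (glue : T * 'I_4 -> T * 'I_4) x s :
  path (fun s s' : T * 'I_4 => (glue s).1 == s'.1) x s ->
  map (fun s => (glue s).1) (belast x s) = map fst s.
Proof. by elim: s x => [|y s IH] x //= /andP[/eqP-> /IH ->]. Qed.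

Lemma cyc_delta0 (T : finType) (glue : T * 'I_4 -> T * 'I_4) (top : T * 'I_4 -> bool)
  (R : realType) (f : T -> R) c :
  directed_cycle glue top c -> \sum_(s <- c) delta glue top f s = 0.
Proof.
case; case: c => // x c _ tc cy _.
rewrite (eq_big_seq (fun s => f (glue s).1 - f s.1)); last first.
  by move=> s sc; rewrite /delta (allP tc s sc).
rewrite sumrB; apply/eqP; rewrite subr_eq0; apply/eqP.
rewrite -(big_map (fun s => (glue s).1) xpredT f).
have := walk_map cy; rewrite belast_rcons => ->.
rewrite big_map; apply: perm_big; by rewrite perm_rcons.
Qed.

Lemma side_sumD (T : finType) glue gp top (R : realType) (a b : T * 'I_4 -> R) o up :
  side_sum glue gp top (fun s => a s + b s) o up =
  side_sum glue gp top a o up + side_sum glue gp top b o up.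
Proof. by rewrite /side_sum -big_split; apply: eq_bigr => x _; rewrite -big_split. Qed.

Lemma side_sum_eq (T : finType) glue gp top (R : realType) (a b : T * 'I_4 -> R) o up :
  (forall s, a s = b s) -> side_sum glue gp top a o up = side_sum glue gp top b o up.
Proof. by move=> E; rewrite /side_sum; apply: eq_bigr => x _; apply: eq_bigr => i _. Qed.

Theorem mainTheorem11 (T : finType) (glue : T * 'I_4 -> T * 'I_4)
    (gp : T * 'I_4 -> {perm 'I_4}) (top : T * 'I_4 -> bool) (R : realType) :
  veering_triangulation glue gp top ->
  (forall u : T * 'I_4 -> R, tau_cycle glue gp top u ->
     (in_cone2 glue gp top u <-> in_cone1_dual glue top u)) /\
  (forall u : T * 'I_4 -> R, tau_cycle glue gp top u ->
     integral_class glue gp top u -> in_cone1_dual glue top u ->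
     carried_surface_class glue gp top u).
Proof.
case=> [[g2 [_ [gpo [_ [godd _]]]]] [_ tg] _ _].
have DF := fun f : T -> R => delta_face f g2 tg.
have DS := fun f : T -> R => delta_switch top f g2 gpo godd.
split.
  move=> u [uf us]; split.
    case=> w [_ wpos [f Hf]] c dc.
    have := cyc_delta0 f dc.
    rewrite (eq_bigr (fun s => w s - u s)); last by move=> s _; rewrite Hf addrC addKr.
    rewrite sumrB => /eqP; rewrite subr_eq0 => /eqP <-.
    by apply: sumr_ge0 => s _.
  move=> Hc; have [g Hg] := BF Hc.
  exists (fun s => u s + delta glue top g s); split.
  - split; first by move=> s; rewrite uf DF.
    by move=> o Ho; rewrite !side_sumD (us o Ho) (DS g o Ho).
  - move=> s; case: (boolP (top s)) => ts.
      by rewrite /delta ts addrA; apply: Hg.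
    have tgs : top (glue s) by rewrite tg ts.
    rewrite -uf -DF /delta tgs addrA; apply: Hg tgs.
  - by exists g.
move=> u [uf us] [z [[zf zs] [f0 Hf0]]] Hc.
have Hz : forall c, directed_cycle glue top c -> 0 <= \sum_(s <- c) z s.
  move=> c dc; have := Hc c dc.
  rewrite (eq_bigr _ (fun s _ => Hf0 s)) big_split /= cyc_delta0 // addr0.
  by rewrite -(rmorph_sum (intr : int -> R)) ler0z.
have [g Hg] := BF Hz.
pose wI s : int := z s + (if top s then g (glue s).1 - g s.1 else g s.1 - g (glue s).1).
have zf' : forall s, z (glue s) = z s by move=> s; apply: (@intr_inj R); apply: zf.
have wpos : forall s, 0 <= wI s.
  move=> s; rewrite /wI; case: (boolP (top s)) => ts.
    by rewrite addrA; apply: Hg.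
  have tgs : top (glue s) by rewrite tg ts.
  by rewrite -zf' addrA; have := Hg _ tgs; rewrite g2.
pose G v : R := (g v)%:~R.
have En : forall s, ((absz (wI s))%:R : R) = (z s)%:~R + delta glue top G s.
  move=> s; rewrite natr_absz ger0_norm // /wI /delta /G.
  by case: (top s); rewrite rmorphD rmorphB.
exists (fun s => absz (wI s)); split.
  split; first by move=> s /=; rewrite !En zf DF.
  move=> o Ho; rewrite !(side_sum_eq _ _ _ _ _ En) !side_sumD (zs o Ho) (DS G o Ho).
  by [].
exists (fun v => G v - f0 v) => s; rewrite En Hf0 /delta.
by case: (top s); ring.
Qed.
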